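(* Let $M$ be a von Neumann algebra, $\omega$ a faithful normal state on $M$, and $T:M\to M$ a positive linear map with $T(I)\le I$. Suppose there exists $\delta>0$ such that for all $k\ge0$, \[ \omega(T^k(d(T)))\in\{0\}\cup[\delta,\infty). \] Then the stabilization index satisfies $n_T\le\lfloor 1/\delta\rfloor$.
   Context: $d(T)=I-T(I)\ge0$ is the defect; $T^0=\mathrm{id}$. The stabilization index is $n_T=\min\{n\ge1:T^n(d(T))=0\}$. A state $\omega$ is faithful if $\omega(x)=0$ with $x\ge0$ implies $x=0$. *)

(* Defs.v *)
From mathcomp Require Import all_boot all_order all_algebra.
From mathcomp Require Import all_classical all_reals.
From mathcomp.real_closed Require Export complex.
Export GRing.Theory Num.Theory.

Set Implicit Arguments.
Unset Strict Implicit.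
Unset Printing Implicit Defensive.

Local Open Scope ring_scope.
Local Open Scope classical_set_scope.

Section Hilbert.
Variables (R : realType) (H : lmodType R[i]) (ip : H -> H -> R[i]).

Definition hnorm (x : H) : R := Num.sqrt (complex.Re (ip x x)).

Definition h_cauchy (u : nat -> H) : Prop :=
  forall e : R, 0 < e -> exists N : nat, forall m n : nat,
    (N <= m)%N -> (N <= n)%N -> hnorm (u m - u n) < e.

Definition h_converges (u : nat -> H) (x : H) : Prop :=
  forall e : R, 0 < e -> exists N : nat, forall n : nat,
    (N <= n)%N -> hnorm (u n - x) < e.

Definition is_hilbert : Prop :=
  [/\ (forall (a : R[i]) (x y z : H), ip (a *: x + y) z = a * ip x z + ip y z),
      (forall x y : H, ip y x = Num.conj (ip x y)),
      (forall x : H, 0 <= ip x x),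
      (forall x : H, ip x x = 0 -> x = 0)
    & (forall u : nat -> H, h_cauchy u -> exists x : H, h_converges u x)].

Definition op := H -> H.

Definition op0 : op := fun _ => 0.
Definition op1 : op := fun x => x.
Definition op_add (a b : op) : op := fun x => a x + b x.
Definition op_opp (a : op) : op := fun x => - a x.
Definition op_sub (a b : op) : op := fun x => a x - b x.
Definition op_scale (c : R[i]) (a : op) : op := fun x => c *: a x.
Definition op_mul (a b : op) : op := fun x => a (b x).

Definition bounded_op (a : op) : Prop :=
  (forall (c : R[i]) (x y : H), a (c *: x + y) = c *: a x + a y) /\
  exists K : R, forall x : H, hnorm (a x) <= K * hnorm x.

Definition adjoint_of (a b : op) : Prop :=
  forall x y : H, ip (a x) y = ip x (b y).

Definition self_adjoint (a : op) : Prop := adjoint_of a a.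

Definition commutant (S : set op) : set op :=
  [set a | bounded_op a /\ forall s, S s -> op_mul a s = op_mul s a].

Definition von_neumann (M : set op) : Prop :=
  [/\ (forall a, M a -> bounded_op a),
      M op1,
      (forall a b, M a -> M b -> M (op_add a b)),
      (forall c a, M a -> M (op_scale c a))
    & [/\ (forall a b, M a -> M b -> M (op_mul a b)),
          (forall a, M a -> exists2 b, M b & adjoint_of a b)
        & M = commutant (commutant M)]].

Definition op_pos (a : op) : Prop := forall x : H, 0 <= ip (a x) x.
Definition op_le (a b : op) : Prop := op_pos (op_sub b a).

Definition linear_on (M : set op) (w : op -> R[i]) : Prop :=
  forall (c : R[i]) (a b : op), M a -> M b ->
    w (op_add (op_scale c a) b) = c * w a + w b.

Definition is_state (M : set op) (w : op -> R[i]) : Prop :=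
  [/\ linear_on M w,
      (forall a, M a -> op_pos a -> 0 <= w a)
    & w op1 = 1].

Definition faithful (M : set op) (w : op -> R[i]) : Prop :=
  forall a, M a -> op_pos a -> w a = 0 -> a = op0.

(* normal: w (sup_alpha x_alpha) = sup_alpha w(x_alpha) for every bounded
   increasing net of positive elements, i.e. for every upward directed
   nonempty family D of positive elements of M with least upper bound x
   (in the self-adjoint part of M). *)
Definition normal (M : set op) (w : op -> R[i]) : Prop :=
  forall (D : set op) (x : op),
    D `<=` M -> (exists d, D d) -> (forall d, D d -> op_pos d) ->
    (forall a b, D a -> D b -> exists2 c, D c & op_le a c /\ op_le b c) ->
    M x -> (forall d, D d -> op_le d x) ->
    (forall y, M y -> self_adjoint y -> (forall d, D d -> op_le d y) -> op_le x y) ->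
    complex.Re (w x) = sup [set complex.Re (w d) | d in D].

Definition linear_map_on (M : set op) (T : op -> op) : Prop :=
  (forall a, M a -> M (T a)) /\
  forall (c : R[i]) (a b : op), M a -> M b ->
    T (op_add (op_scale c a) b) = op_add (op_scale c (T a)) (T b).

Definition positive_map_on (M : set op) (T : op -> op) : Prop :=
  forall a, M a -> op_pos a -> op_pos (T a).

Definition defect (T : op -> op) : op := op_sub op1 (T op1).

Definition stab_index (T : op -> op) (n : nat) : Prop :=
  [/\ (1 <= n)%N,
      iter n T (defect T) = op0
    & forall m : nat, (1 <= m)%N -> iter m T (defect T) = op0 -> (n <= m)%N].

End Hilbert.

(* Main.v *)
Require Import Defs.
From mathcomp Require Import all_boot all_order all_algebra.
From mathcomp Require Import all_classical all_reals.
From mathcomp.real_closed Require Import complex.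
Import Order.TTheory GRing.Theory Num.Theory.
Local Open Scope ring_scope.
Local Open Scope classical_set_scope.

Theorem proposition7p23 (R : realType) (H : lmodType R[i]) (ip : H -> H -> R[i])
  (M : set (op H)) (w : op H -> R[i]) (T : op H -> op H) (delta : R) :
  is_hilbert ip ->
  von_neumann ip M ->
  is_state ip M w -> faithful ip M w -> normal ip M w ->
  linear_map_on M T -> positive_map_on ip M T ->
  op_le ip (T (@op1 _ H)) (@op1 _ H) ->
  0 < delta ->
  delta <= 1 ->
  (forall k : nat,
      w (iter k T (defect T)) = 0 \/ real_complex R delta <= w (iter k T (defect T))) ->
  exists n : nat, stab_index T n /\ (n%:Z <= Num.floor (delta^-1))%R.
Proof.
move=> [_ _ ippos _ _] [_ Mop1 Madd Msc _] [wlin wpos w1] wfaith _ [TM Tlin] Tpos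
  Tle dpos d1 hyp.
set d := defect T.
have Mop0 : M (@op0 _ H).
  have -> : @op0 _ H = op_scale 0 (@op1 _ H).
    by apply/funext => x; rewrite /op_scale scale0r.
  exact: Msc.
have T0 : T (@op0 _ H) = (@op0 _ H).
  have e : @op0 _ H = op_add (op_scale (-1) (@op0 _ H)) (@op0 _ H).
    by apply/funext => x; rewrite /op_add /op_scale /op0 scaler0 addr0.
  rewrite {1}e Tlin //; apply/funext => x.
  by rewrite /op_add /op_scale scaleN1r addNr.
have iterM : forall k a, M a -> M (iter k T a).
  by elim=> [//|k IH] a Ma /=; apply: TM; apply: IH.
have iterlin : forall k c a b, M a -> M b ->
    iter k T (op_add (op_scale c a) b) = op_add (op_scale c (iter k T a)) (iter k T b).
  elim=> [//|k IH] c a b Ma Mb /=.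
  by rewrite IH // Tlin //; apply: iterM.
have MT1 : M (T (@op1 _ H)) by apply: TM.
have dE : d = op_add (op_scale (-1) (T (@op1 _ H))) (@op1 _ H).
  by apply/funext => x; rewrite /d /defect /op_sub /op_add /op_scale scaleN1r addrC.
have Md : M d by rewrite dE; apply: Madd => //; apply: Msc.
have pos1 : forall n, op_pos ip (iter n T (@op1 _ H)).
  elim=> [|n IH] /=; first by move=> x; apply: ippos.
  by apply: Tpos => //; apply: iterM.
have posd : forall n, op_pos ip (iter n T d).
  elim=> [|n IH] /=; first exact: Tle.
  by apply: Tpos => //; apply: iterM.
have wsum : forall n, \sum_(k < n) w (iter k T d) = 1 - w (iter n T (@op1 _ H)).
  elim=> [|n IH]; first by rewrite big_ord0 /= w1 subrr.
  rewrite big_ord_recr /= IH dE iterlin // -iterSr.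
  have := wlin (-1) (iter n.+1 T (@op1 _ H)) (iter n T (@op1 _ H)) (iterM _ _ Mop1) (iterM _ _ Mop1).
  rewrite /= => ->.
  by rewrite mulN1r addrCA subrK addrC.
have A : forall n, (forall k, (k < n)%N -> iter k T d <> (@op0 _ H)) -> n%:R * delta <= 1.
  move=> n hn.
  have : \sum_(k < n) (real_complex R delta) <= \sum_(k < n) w (iter k T d).
    apply: ler_sum => k _.
    case: (hyp k) => // h0; exfalso; apply: (hn k (ltn_ord k)).
    by apply: wfaith => //; apply: iterM.
  rewrite wsum sumr_const card_ord => h.
  have : real_complex R (n%:R * delta) <= real_complex R 1.
    apply: le_trans; last first.
      apply: le_trans h _.
      by rewrite lerBlDr lerDl; apply: wpos => //; apply: iterM.
    by rewrite rmorphM rmorph_nat mulr_natl.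
  by rewrite lecR.
have [ex|nex] := pselect (exists k, iter k T d = (@op0 _ H)); last first.
  exfalso.
  have := A (Num.truncn (delta^-1)).+1.
  have H1 : forall k, (k < (Num.truncn delta^-1).+1)%N -> iter k T d <> (@op0 _ H).
    by move=> k _ hk; apply: nex; exists k.
  move=> /(_ H1).
  have := truncnS_gt (delta^-1).
  rewrite -(ltr_pM2r dpos) mulVf ?lt0r_neq0 //.
  by move=> h1 h2; have := lt_le_trans h1 h2; rewrite ltxx.
have exP : exists m, `[< (1 <= m)%N /\ iter m T d = (@op0 _ H) >].
  case: ex => k hk; exists k.+1; apply/asboolP; split => //.
  by rewrite /= hk T0.
case: (ex_minnP exP) => m /asboolP [m1 hm] hmin.
exists m; split.
  split => // m' m1' hm'; apply: hmin; exact/asboolP.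
rewrite floor_ge_int -[_%:~R]/(m%:R) -(ler_pM2r dpos) mulVf ?lt0r_neq0 //.
case: (pselect (exists k, (k < m)%N /\ iter k T d = (@op0 _ H))) => [[k [km hk]]|nk];
  last by apply: A => k km hk; apply: nk; exists k.
case: k km hk => [|k] km hk.
  have : (m <= 1)%N by apply: hmin; apply/asboolP; split => //; move: hk => /= ->; exact: T0.
  move=> hm1; have -> : m = 1%N by apply/eqP; rewrite eqn_leq hm1 m1.
  by rewrite mul1r.
have : (m <= k.+1)%N by apply: hmin; apply/asboolP; split.
by rewrite leqNgt km.
Qed.
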